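(* Let $A$ and $B$ be rings, $f: A\to B$ a ring homomorphism and $J$ a proper ideal of $B$ such that $f^{-1}(J)\subseteq \mathrm{nil}(A)$. Then $A\bowtie^{f}J$ is a nil-Armendariz ring if and only if $f(A)+J$ is a nil-Armendariz ring.
   Context: All rings are associative with identity (not necessarily commutative), ring homomorphisms are unital, and ideals are two-sided. $\mathrm{nil}(R)$ denotes the set of nilpotent elements of a ring $R$, and $\mathrm{nil}(R)[x]$ the set of polynomials all of whose coefficients lie in $\mathrm{nil}(R)$. For a ring homomorphism $f:A\to B$ and an ideal $J$ of $B$, the amalgamation is the subring $A\bowtie^{f}J=\{(a,f(a)+j)\mid a\in A,\ j\in J\}$ of $A\times B$; $f(A)+J=\{f(a)+j: a\in A, j\in J\}$ is a subring of $B$. A ring $R$ is nil-Armendariz if whenever $p(x)=\sum_{i=0}^n a_ix^i$ and $q(x)=\sum_{j=0}^m b_jx^j$ in $R[x]$ satisfy $p(x)q(x)\in\mathrm{nil}(R)[x]$, then $a_ib_j\in\mathrm{nil}(R)$ for all $i,j$. *)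

(* Defs.v *)
From HB Require Import structures.
From mathcomp Require Import all_boot all_order all_algebra.
From Stdlib Require Import ClassicalEpsilon.
Set Implicit Arguments. Unset Strict Implicit. Unset Printing Implicit Defensive.
Import GRing.Theory.
Local Open Scope ring_scope.

Definition nilpotent (R : nzRingType) (x : R) : Prop := exists n : nat, x ^+ n = 0.

(* R is nil-Armendariz: p q in R[x] with p q in nil(R)[x] imply
   a_i b_j in nil(R) for all coefficients a_i of p and b_j of q.
   ({poly R} over a non-commutative ring R: x commutes with coefficients.) *)
Definition nil_armendariz (R : nzRingType) : Prop :=
  forall p q : {poly R},
    (forall k : nat, nilpotent (p * q)`_k) ->
    forall i j : nat, nilpotent (p`_i * q`_j).

Definition two_sided_ideal (R : nzRingType) (J : {pred R}) : Prop :=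
  [/\ 0 \in J,
      (forall x y, x \in J -> y \in J -> x - y \in J),
      (forall r x, x \in J -> r * x \in J) &
      (forall r x, x \in J -> x * r \in J)].

Record ideal (R : nzRingType) := Ideal {
  ideal_pred :> {pred R};
  idealP : two_sided_ideal ideal_pred }.

Definition pbool (P : Prop) : bool :=
  if excluded_middle_informative P then true else false.

Lemma pboolP (P : Prop) : reflect P (pbool P).
Proof. rewrite /pbool; case: excluded_middle_informative => H; constructor => //. Qed.

Section Amalgamation.
Variables (A B : nzRingType) (f : {rmorphism A -> B}) (J : ideal B).
Let HJ : two_sided_ideal J := idealP J.

Definition amalg_pred : {pred A * B} :=
  fun x => pbool (exists a : A, exists2 j : B, j \in J & x = (a, f a + j)).

Definition fAJ_pred : {pred B} :=
  fun b => pbool (exists a : A, exists2 j : B, j \in J & b = f a + j).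

Lemma amalg_memP x :
  reflect (exists a : A, exists2 j : B, j \in J & x = (a, f a + j)) (x \in amalg_pred).
Proof. exact: pboolP. Qed.

Lemma fAJ_memP b :
  reflect (exists a : A, exists2 j : B, j \in J & b = f a + j) (b \in fAJ_pred).
Proof. exact: pboolP. Qed.

Lemma amalg_memE x : (x \in amalg_pred) = (x.2 - f x.1 \in J).
Proof.
case: HJ => J0 JB Jl Jr.
apply/amalg_memP/idP => [[a [j Jj ->]] | H].
  by rewrite /= addrC addKr.
by exists x.1; exists (x.2 - f x.1) => //; rewrite addrC subrK; case: x {H}.
Qed.

Lemma amalg_subring : subring_closed amalg_pred.
Proof.
case: HJ => J0 JB Jl Jr.
have JD u v : u \in J -> v \in J -> u + v \in J.
  by move=> Hu Hv; rewrite -[v]opprK; apply: (JB) => //; rewrite -sub0r; apply: (JB).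
split.
- by rewrite amalg_memE /= rmorph1 subrr.
- move=> x y; rewrite !amalg_memE /= rmorphB => Hx Hy.
  have -> : x.2 - y.2 - (f x.1 - f y.1) = (x.2 - f x.1) - (y.2 - f y.1).
    by rewrite !opprD addrACA.
  exact: (JB).
- move=> x y; rewrite !amalg_memE /= rmorphM => Hx Hy.
  have -> : x.2 * y.2 - f x.1 * f y.1
          = x.2 * (y.2 - f y.1) + (x.2 - f x.1) * f y.1.
    by rewrite mulrBr mulrBl addrA subrK.
  by apply: (JD); [apply: (Jl) | apply: (Jr)].
Qed.

Lemma fAJ_subring : subring_closed fAJ_pred.
Proof.
case: HJ => J0 JB Jl Jr.
have JD u v : u \in J -> v \in J -> u + v \in J.
  by move=> Hu Hv; rewrite -[v]opprK; apply: (JB) => //; rewrite -sub0r; apply: (JB).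
split.
- by apply/fAJ_memP; exists 1; exists 0 => //; rewrite rmorph1 addr0.
- move=> x y /fAJ_memP [a [j Jj ->]] /fAJ_memP [b [k Jk ->]]; apply/fAJ_memP.
  exists (a - b); exists (j - k); first exact: (JB).
  by rewrite rmorphB opprD !addrA; congr (_ + _); rewrite -!addrA; congr (_ + _);
     rewrite addrC.
- move=> x y /fAJ_memP [a [j Jj ->]] /fAJ_memP [b [k Jk ->]]; apply/fAJ_memP.
  exists (a * b); exists (f a * k + j * f b + j * k).
    by apply: (JD); [apply: (JD); [apply: (Jl) | apply: (Jr)] | apply: (Jl)].
  by rewrite rmorphM mulrDl !mulrDr !addrA.
Qed.

HB.instance Definition _ := GRing.isSubringClosed.Build (A * B)%type amalg_pred amalg_subring.
HB.instance Definition _ := GRing.isSubringClosed.Build B fAJ_pred fAJ_subring.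

Definition amalg := {x : A * B | x \in amalg_pred}.
HB.instance Definition _ := [isSub for (@proj1_sig _ _ : amalg -> _)].
HB.instance Definition _ := [Choice of amalg by <:].
HB.instance Definition _ := [SubChoice_isSubNzRing of amalg by <:].

Definition fAJ := {x : B | x \in fAJ_pred}.
HB.instance Definition _ := [isSub for (@proj1_sig _ _ : fAJ -> _)].
HB.instance Definition _ := [Choice of fAJ by <:].
HB.instance Definition _ := [SubChoice_isSubNzRing of fAJ by <:].

End Amalgamation.

(* Main.v *)
Require Import Defs.
From HB Require Import structures.
From mathcomp Require Import all_boot all_order all_algebra.
Import GRing.Theory.
Local Open Scope ring_scope.

Lemma pairX (R S : nzRingType) (a : R) (b : S) m : (a, b) ^+ m = (a ^+ m, b ^+ m).
Proof. by elim: m => [|m IH]; rewrite ?expr0 // !exprS IH. Qed.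

Section Proj.
Variables (A B : nzRingType) (f : {rmorphism A -> B}) (J : ideal B).

Lemma pi_mem (x : amalg f J) : (val x).2 \in fAJ_pred f J.
Proof.
have := valP x; rewrite amalg_memE => Hx.
apply/fAJ_memP; exists (val x).1; exists ((val x).2 - f (val x).1) => //.
by rewrite addrC subrK.
Qed.

Definition pi (x : amalg f J) : fAJ f J := Sub (val x).2 (pi_mem x).

Lemma val_pi x : val (pi x) = (val x).2.
Proof. by rewrite /pi SubK. Qed.

Lemma pi_zmod : zmod_morphism pi.
Proof. by move=> x y; apply: val_inj; rewrite !(val_pi, rmorphB). Qed.
HB.instance Definition _ := GRing.isZmodMorphism.Build _ _ pi pi_zmod.

Lemma pi_monoid : monoid_morphism pi.
Proof.
split; first by apply: val_inj; rewrite val_pi !rmorph1.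
by move=> x y; apply: val_inj; rewrite !(val_pi, rmorphM).
Qed.
HB.instance Definition _ := GRing.isMonoidMorphism.Build _ _ pi pi_monoid.

Lemma pi_surj (y : fAJ f J) : exists x, pi x = y.
Proof.
have /fAJ_memP [a [j Jj Ey]] := valP y.
have Hm : (a, val y) \in amalg_pred f J.
  by apply/amalg_memP; exists a; exists j; rewrite ?Ey.
exists (Sub (a, val y) Hm); apply: val_inj; by rewrite val_pi SubK.
Qed.

Lemma nil_pi (HJ : forall a : A, f a \in J -> nilpotent a) (x : amalg f J) :
  nilpotent x <-> nilpotent (pi x).
Proof.
split=> [[n Hn] | [n Hn]].
  by exists n; rewrite -rmorphXn Hn rmorph0.
have Hv : val (pi (x ^+ n)) = 0 by rewrite rmorphXn Hn.
rewrite val_pi in Hv.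
have := valP (x ^+ n); rewrite amalg_memE Hv sub0r => Hm.
have Hf : f (val (x ^+ n)).1 \in J.
  case: (idealP J) => J0 JB _ _.
  by rewrite -[f _]opprK -sub0r; apply: JB.
have [m Hm'] := HJ _ Hf.
exists (n * m)%N; rewrite exprM; apply: val_inj; rewrite rmorph0.
have -> : val (x ^+ n ^+ m) = (val (x ^+ n)) ^+ m by rewrite rmorphXn.
move: Hv Hm'; case: (val (x ^+ n)) => a b /= -> Ha.
rewrite pairX Ha; case: m Ha => [|m]; first by rewrite expr0 => /eqP; rewrite oner_eq0.
by rewrite expr0n.
Qed.
End Proj.
Arguments pi {A B f J}.
Arguments pi_surj {A B f J}.
Arguments nil_pi {A B f J}.

Theorem theorem3p1 (A B : nzRingType) (f : {rmorphism A -> B}) (J : ideal B) :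
  (1 : B) \notin J ->
  (forall a : A, f a \in J -> nilpotent a) ->
  nil_armendariz (amalg f J) <-> nil_armendariz (fAJ f J).
Proof.
move=> _ HJ.
have key : forall P Q : {poly amalg f J}, forall k,
    pi ((P * Q)`_k) = (map_poly (@pi A B f J) P * map_poly (@pi A B f J) Q)`_k.
  by move=> P Q k; rewrite -rmorphM coef_map.
split=> H.
- move=> p q Hpq i j.
  have surj y : exists x : amalg f J, pi x == y.
    by have [x Hx] := pi_surj y; exists x; apply/eqP.
  pose s y := xchoose (surj y).
  have sK y : pi (s y) = y by apply/eqP; exact: (xchooseP (surj y)).
  have lift (r : {poly fAJ f J}) : map_poly (@pi A B f J) (\poly_(i < size r) s r`_i) = r.
    apply/polyP => l; rewrite coef_map coef_poly; case: ltnP => Hl.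
      by apply: sK.
    by rewrite raddf0 nth_default.
  pose P := \poly_(i < size p) s p`_i.
  pose Q := \poly_(i < size q) s q`_i.
  have HPQ : forall k, nilpotent (P * Q)`_k.
    by move=> k; apply/(nil_pi HJ); rewrite key !lift.
  have := H P Q HPQ i j; move/(nil_pi HJ); rewrite rmorphM.
  by rewrite -!coef_map !lift.
- move=> P Q HPQ i j; apply/(nil_pi HJ); rewrite rmorphM -!coef_map.
  apply: H => k; rewrite -key; exact/(nil_pi HJ).
Qed.
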